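(* Let $\mathcal{A}=\{a_1,a_2,\ldots\}$ be a countably infinite set, let $X$ be a discrete random variable taking values in $\{a_1,\ldots,a_m\}$ for some $m\in\mathbb{N}$, and let $Y$ be a discrete random variable taking values in $\mathcal{A}$. Assume $d_{\mathrm{TV}}(X,Y)\le\eta$ for some $\eta\in(0,1)$. Let $M$ be an integer with $M\ge\max\{m+1,\frac{1}{1-\eta}\}$, and assume that for some $\mu>0$, $$-\sum_{i=M}^\infty P_Y(a_i)\log P_Y(a_i)\le\mu.$$ Then $$|H(X)-H(Y)|\le\eta\log(M-1)+h(\eta)+\mu.$$
   Context: The total variation distance is $d_{\mathrm{TV}}(X,Y) = \frac12\sum_{u\in\mathcal{A}}|P_X(u)-P_Y(u)|$, where $P_X,P_Y$ are the probability mass functions. All logarithms are natural and entropies are in nats, with $0\log0=0$. $h(x) = -x\log x-(1-x)\log(1-x)$ denotes the binary entropy function. *)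

(* Defs.v *)
From Stdlib Require Import Reals.
Open Scope R_scope.

(* Alphabet A = {a_1, a_2, ...} is encoded by nat: a_(i+1) <-> i.
   A probability mass function on A is p : nat -> R. *)
Definition is_pmf (p : nat -> R) : Prop :=
  (forall i, 0 <= p i) /\ infinite_sum p 1.

(* Entropy term -x log x (Stdlib's ln 0 is some real, so 0 * ln 0 = 0). *)
Definition negxlogx (x : R) : R := - (x * ln x).

Definition entropy_is (p : nat -> R) (H : R) : Prop :=
  infinite_sum (fun i => negxlogx (p i)) H.

Definition dTV_is (p q : nat -> R) (d : R) : Prop :=
  exists s, infinite_sum (fun i => Rabs (p i - q i)) s /\ d = s / 2.

Definition hbin (x : R) : R := - x * ln x - (1 - x) * ln (1 - x).

(* Main.v *)
Require Import Defs.
From Stdlib Require Import Reals Lra Lia.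
Open Scope R_scope.

Lemma lnle1 x : 0 < x -> ln x <= x - 1.
Proof. intros H. pose proof (exp_ineq1_le (ln x)). rewrite exp_ln in H0; lra. Qed.

Lemma ln_le' x y : 0 < x -> x <= y -> ln x <= ln y.
Proof. intros H1 H2. destruct (Req_dec x y). subst; lra.
left; apply ln_increasing; lra. Qed.

Lemma Lp x z : 0 <= x -> 0 <= z -> (0 < x -> 0 < z) -> x * ln z - x * ln x <= z - x.
Proof. intros Hx Hz H. destruct (Req_dec x 0). subst. lra.
assert (0 < x) by lra. specialize (H H1).
pose proof (lnle1 (z / x)) as L. assert (0 < z/x) by (apply Rdiv_lt_0_compat; lra).
specialize (L H2). unfold Rdiv in L. rewrite ln_mult, ln_Rinv in L by (try apply Rinv_0_lt_compat; lra).
apply Rmult_le_compat_l with (r := x) in L; [|lra].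
replace (x * (z * / x - 1)) with (z - x) in L by (field; lra). lra. Qed.

Lemma f0 : negxlogx 0 = 0.
Proof. unfold negxlogx. ring. Qed.

Lemma f_nonneg x : 0 <= x <= 1 -> 0 <= negxlogx x.
Proof. intros H. unfold negxlogx. destruct (Req_dec x 0). subst; lra.
assert (ln x <= 0) by (rewrite <- ln_1; apply ln_le'; lra).
nra. Qed.

Lemma subadd x y : 0 <= x -> 0 <= y -> negxlogx (x + y) <= negxlogx x + negxlogx y.
Proof. intros Hx Hy. unfold negxlogx.
destruct (Req_dec x 0). subst. rewrite Rplus_0_l. lra.
destruct (Req_dec y 0). subst. rewrite Rplus_0_r. lra.
assert (ln x <= ln (x+y)) by (apply ln_le'; lra).
assert (ln y <= ln (x+y)) by (apply ln_le'; lra). nra. Qed.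

Lemma xlnmul x a s : 0 <= x -> x <= a -> 0 < s -> x * ln (a * s) = x * ln a + x * ln s.
Proof. intros. destruct (Req_dec x 0). subst; ring.
rewrite ln_mult by lra. ring. Qed.

Lemma conc x y a b : 0 <= x -> 0 <= y -> a + b = 1 -> x <= a -> y <= b ->
  negxlogx x + negxlogx y + x * ln a + y * ln b <= negxlogx (x + y).
Proof. intros Hx Hy Hab Hxa Hyb. unfold negxlogx.
destruct (Req_dec (x+y) 0).
{ assert (x = 0) by lra. assert (y = 0) by lra. subst. lra. }
assert (0 < x + y) by lra.
pose proof (Lp x (a*(x+y)) Hx ltac:(nra) ltac:(intros; nra)) as L1.
pose proof (Lp y (b*(x+y)) Hy ltac:(nra) ltac:(intros; nra)) as L2.
rewrite xlnmul in L1 by lra. rewrite xlnmul in L2 by lra.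
nra. Qed.

Lemma fle_tail x T : 0 <= x <= T -> x * (- ln T) <= negxlogx x.
Proof. intros H. unfold negxlogx. destruct (Req_dec x 0). subst; lra.
assert (ln x <= ln T) by (apply ln_le'; lra). nra. Qed.

Fixpoint sm (n : nat) (g : nat -> R) : R :=
  match n with O => 0 | S n => sm n g + g n end.

Lemma sm_ext n g h : (forall i, (i < n)%nat -> g i = h i) -> sm n g = sm n h.
Proof. induction n; simpl; intros H; auto. rewrite IHn by (intros; apply H; lia). rewrite H by lia. auto. Qed.

Lemma sm_le n g h : (forall i, (i < n)%nat -> g i <= h i) -> sm n g <= sm n h.
Proof. induction n; simpl; intros H. lra. pose proof (IHn ltac:(intros; apply H; lia)). pose proof (H n ltac:(lia)). lra. Qed.

Lemma sm_plus n g h : sm n (fun i => g i + h i) = sm n g + sm n h.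
Proof. induction n; simpl. ring. rewrite IHn. ring. Qed.

Lemma sm_minus n g h : sm n (fun i => g i - h i) = sm n g - sm n h.
Proof. induction n; simpl. ring. rewrite IHn. ring. Qed.

Lemma sm_scal n g c : sm n (fun i => g i * c) = sm n g * c.
Proof. induction n; simpl. ring. rewrite IHn. ring. Qed.

Lemma sm_const n c : sm n (fun _ => c) = INR n * c.
Proof. induction n; simpl. ring. rewrite IHn. destruct n; simpl; ring. Qed.

Lemma sm_nonneg n g : (forall i, (i < n)%nat -> 0 <= g i) -> 0 <= sm n g.
Proof. intros H. apply sm_le in H. rewrite sm_const, Rmult_0_r in H. auto. Qed.

Lemma sm_term n g j : (forall i, (i < n)%nat -> 0 <= g i) -> (j < n)%nat -> g j <= sm n g.
Proof. induction n; intros H Hj. lia. simpl.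
 destruct (Nat.eq_dec j n). subst. pose proof (sm_nonneg n g ltac:(intros; apply H; lia)). lra.
 pose proof (IHn ltac:(intros; apply H; lia) ltac:(lia)). pose proof (H n ltac:(lia)). lra. Qed.

Lemma sm_exists_pos n g : 0 < sm n g -> exists j, (j < n)%nat /\ 0 < g j.
Proof. induction n; simpl; intros H. lra.
 destruct (Rlt_dec 0 (g n)). exists n; split; auto.
 destruct IHn as [j [Hj Hg]]. lra. exists j; split; auto. Qed.

Lemma sm_ind n j c : (j < n)%nat -> sm n (fun i => if Nat.eqb i j then 0 else c) = INR (n - 1) * c.
Proof. induction n; intros Hj. lia. simpl.
 destruct (Nat.eq_dec j n).
 - subst. rewrite Nat.eqb_refl. rewrite (sm_ext n _ (fun _ => c)).
   rewrite sm_const. replace (n - 0)%nat with n by lia. ring.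
   intros i Hi. destruct (Nat.eqb_spec i n); [lia|auto].
 - rewrite IHn by lia. destruct (Nat.eqb_spec n j); [lia|].
   replace (n - 0)%nat with (S (n - 1)) by lia. rewrite (S_INR (n-1)). ring. Qed.

Lemma sm_sum_f g n : sum_f_R0 g n = sm (S n) g.
Proof. induction n; simpl. ring. rewrite IHn. simpl. ring. Qed.

Lemma sm_shift k N g : sm (k + N) g = sm N g + sm k (fun i => g (i + N)%nat).
Proof. induction k; simpl. ring. rewrite IHk. ring. Qed.

Lemma sm_stab n k g : (forall i, (n <= i)%nat -> g i = 0) -> sm (k + n) g = sm n g.
Proof. intros H. rewrite sm_shift. rewrite (sm_ext k _ (fun _ => 0)). rewrite sm_const. ring.
 intros; apply H; lia. Qed.

Lemma inf_fin g n : (forall i, (n <= i)%nat -> g i = 0) -> infinite_sum g (sm n g).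
Proof. intros H eps He. exists n. intros k Hk. rewrite sm_sum_f.
 replace (S k) with ((S k - n) + n)%nat by lia. rewrite sm_stab by auto.
 unfold Rdist. rewrite Rminus_diag, Rabs_R0. lra. Qed.

Lemma inf_ext g h l : (forall i, g i = h i) -> infinite_sum g l -> infinite_sum h l.
Proof. intros E H eps He. destruct (H eps He) as [N HN]. exists N. intros n Hn.
 rewrite (sm_sum_f h), <- (sm_ext _ g h) by auto. rewrite <- sm_sum_f. auto. Qed.

Lemma inf_shift1 g l N : infinite_sum g l -> infinite_sum (fun k => g (k + N)%nat) (l - sm N g).
Proof. intros H eps He. destruct (H eps He) as [N0 HN]. exists N0. intros n Hn.
 rewrite sm_sum_f. specialize (HN (n + N)%nat ltac:(lia)). rewrite sm_sum_f in HN.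
 replace (S (n + N)) with (S n + N)%nat in HN by lia. rewrite sm_shift in HN.
 unfold Rdist in *. replace (sm (S n) (fun k => g (k + N)%nat) - (l - sm N g)) with
   (sm N g + sm (S n) (fun i => g (i + N)%nat) - l) by ring. auto. Qed.

Lemma inf_shift2 g l N : infinite_sum (fun k => g (k + N)%nat) l -> infinite_sum g (sm N g + l).
Proof. intros H eps He. destruct (H eps He) as [N0 HN]. exists (N0 + N)%nat. intros n Hn.
 rewrite sm_sum_f. specialize (HN (n - N)%nat ltac:(lia)). rewrite sm_sum_f in HN.
 replace (S n) with (S (n - N) + N)%nat by lia. rewrite sm_shift.
 unfold Rdist in *. replace (sm N g + sm (S (n - N)) (fun i => g (i + N)%nat) - (sm N g + l)) with
   (sm (S (n - N)) (fun k => g (k + N)%nat) - l) by ring. auto. Qed.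

Lemma inf_nonneg_term g l k : (forall i, 0 <= g i) -> infinite_sum g l -> g k <= l.
Proof. intros Hg H. apply Rle_trans with (sum_f_R0 g k).
 rewrite sm_sum_f. apply sm_term; auto. apply sum_incr; auto. Qed.

Lemma inf_scal g l c : infinite_sum g l -> infinite_sum (fun k => g k * c) (l * c).
Proof. intros H. assert (Hc : Un_cv (fun _ => c) c).
 { intros eps He. exists O. intros. unfold Rdist. rewrite Rminus_diag, Rabs_R0. lra. }
 pose proof (CV_mult _ _ _ _ H Hc) as K. intros eps He. destruct (K eps He) as [N HN].
 exists N. intros n Hn. rewrite sm_sum_f, sm_scal, <- sm_sum_f. apply HN; auto. Qed.

Lemma inf_le g h a b : (forall i, g i <= h i) -> infinite_sum g a -> infinite_sum h b -> a <= b.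
Proof. intros E Ha Hb. eapply (@Rle_cv_lim (fun n => sum_f_R0 g n) (fun n => sum_f_R0 h n)); eauto.
 intros n. rewrite !sm_sum_f. apply sm_le. auto. Qed.

Lemma minfacts x y : 0 <= x -> 0 <= y ->
  0 <= Rmin x y /\ 0 <= x - Rmin x y /\ 0 <= y - Rmin x y /\
  (x - Rmin x y) + (y - Rmin x y) = Rabs (x - y) /\
  (0 < x - Rmin x y -> y - Rmin x y = 0).
Proof. intros. unfold Rmin. destruct (Rle_dec x y).
 rewrite Rabs_left1 by lra. lra. rewrite Rabs_right by lra. lra. Qed.

Lemma core (p q : nat -> R) (N : nat) :
  (1 <= N)%nat -> (forall i, (i < S N)%nat -> 0 <= p i) -> (forall i, (i < S N)%nat -> 0 <= q i) ->
  sm (S N) p = 1 -> sm (S N) q = 1 ->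
  sm (S N) (fun i => negxlogx (q i)) - sm (S N) (fun i => negxlogx (p i)) <=
  (sm (S N) (fun i => Rabs (p i - q i)) / 2) * ln (INR N) + hbin (sm (S N) (fun i => Rabs (p i - q i)) / 2).
Proof.
intros HN Hp Hq Sp Sq.
set (K := S N) in *.
set (r := fun i => Rmin (p i) (q i)).
set (a := fun i => p i - r i).
set (b := fun i => q i - r i).
assert (MF : forall i, (i < K)%nat -> 0 <= r i /\ 0 <= a i /\ 0 <= b i /\ a i + b i = Rabs (p i - q i)
   /\ (0 < a i -> b i = 0)).
{ intros i Hi. apply minfacts; auto. }
set (d := sm K (fun i => Rabs (p i - q i)) / 2).
assert (Sab : sm K a - sm K b = 0).
{ rewrite <- sm_minus. rewrite (sm_ext _ _ (fun i => p i - q i)). rewrite sm_minus. lra.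
  intros i _. unfold a, b. ring. }
assert (Sab2 : sm K a + sm K b = 2 * d).
{ rewrite <- sm_plus. unfold d. rewrite (sm_ext _ _ (fun i => Rabs (p i - q i))). field.
  intros i Hi. apply MF; auto. }
assert (Sa : sm K a = d) by lra.
assert (Sb : sm K b = d) by lra.
assert (Sr : sm K r = 1 - d).
{ rewrite <- Sp, <- Sa, <- sm_minus. apply sm_ext. intros; unfold a; ring. }
assert (Hr : forall i, (i < K)%nat -> r i <= 1 - d).
{ intros i Hi. rewrite <- Sr. apply sm_term; auto. intros; apply MF; auto. }
assert (Ha : forall i, (i < K)%nat -> a i <= d).
{ intros i Hi. rewrite <- Sa. apply sm_term; auto. intros; apply MF; auto. }
assert (Hb : forall i, (i < K)%nat -> b i <= d).
{ intros i Hi. rewrite <- Sb. apply sm_term; auto. intros; apply MF; auto. }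
assert (d0 : 0 <= d). { rewrite <- Sa. apply sm_nonneg. intros; apply MF; auto. }
assert (d1 : d <= 1). { assert (0 <= sm K r) by (apply sm_nonneg; intros; apply MF; auto). lra. }
assert (LP : sm K (fun i => negxlogx (r i)) + sm K (fun i => negxlogx (a i))
          + (1 - d) * ln (1 - d) + d * ln d <= sm K (fun i => negxlogx (p i))).
{ apply Rle_trans with (sm K (fun i => negxlogx (r i) + negxlogx (a i) + r i * ln (1 - d) + a i * ln d)).
  - rewrite !sm_plus, !sm_scal, Sr, Sa. lra.
  - apply sm_le. intros i Hi. replace (p i) with (r i + a i) by (unfold a; ring).
    apply conc; try apply MF; auto. ring. }
assert (LA : - d * ln d <= sm K (fun i => negxlogx (a i))).
{ apply Rle_trans with (sm K (fun i => a i * (- ln d))).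
  - rewrite sm_scal, Sa. lra.
  - apply sm_le. intros i Hi. apply fle_tail. split; [apply MF|]; auto. }
assert (UQ : sm K (fun i => negxlogx (q i)) <= sm K (fun i => negxlogx (r i)) + sm K (fun i => negxlogx (b i))).
{ rewrite <- sm_plus. apply sm_le. intros i Hi. replace (q i) with (r i + b i) by (unfold b; ring).
  apply subadd; apply MF; auto. }
assert (UB : sm K (fun i => negxlogx (b i)) <= - d * ln d + d * ln (INR N)).
{ destruct (Req_dec d 0) as [D0|D0].
  - rewrite (sm_ext _ _ (fun _ => 0)). rewrite sm_const, D0. lra.
    intros i Hi. assert (b i = 0). { pose proof (Hb i Hi). pose proof (MF i Hi). lra. }
    rewrite H. apply f0.
  - assert (dp : 0 < d) by lra.
    destruct (sm_exists_pos K a ltac:(lra)) as [j [Hj Haj]].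
    assert (bj : b j = 0) by (apply MF; auto).
    assert (NP : 0 < INR N) by (apply lt_0_INR; lia).
    set (c := d / INR N).
    assert (cp : 0 < c) by (apply Rdiv_lt_0_compat; lra).
    apply Rle_trans with (sm K (fun i => (if Nat.eqb i j then 0 else c) - b i * 1 - b i * ln c)).
    + apply sm_le. intros i Hi. destruct (Nat.eqb_spec i j).
      * subst. rewrite bj, f0. lra.
      * pose proof (Lp (b i) c ltac:(apply MF; auto) ltac:(lra) ltac:(intros; lra)). unfold negxlogx. lra.
    + rewrite !sm_minus, !sm_scal, Sb, sm_ind by auto. unfold K. replace (S N - 1)%nat with N by lia.
      unfold c. unfold Rdiv. rewrite ln_mult, ln_Rinv by (try apply Rinv_0_lt_compat; lra).
      field_simplify; [|lra]. lra. }
unfold hbin. fold d. lra.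
Qed.

Lemma mono d e n : 0 <= d <= e -> 0 < e < 1 -> 1 <= n -> e <= n * (1 - e) ->
  d * ln n + hbin d <= e * ln n + hbin e.
Proof. intros Hd He Hn Hne. unfold hbin.
 pose proof (Lp d e ltac:(lra) ltac:(lra) ltac:(intros; lra)) as L1.
 pose proof (Lp (1 - d) (1 - e) ltac:(lra) ltac:(lra) ltac:(intros; lra)) as L2.
 assert (ln e <= ln n + ln (1 - e)).
 { rewrite <- ln_mult by lra. apply ln_le'; lra. }
 nra. Qed.

Theorem corollary3 (PX PY : nat -> R) (m M : nat) (eta mu : R) :
  is_pmf PX -> is_pmf PY ->
  (forall i, (m <= i)%nat -> PX i = 0) ->
  0 < eta < 1 ->
  (exists d, dTV_is PX PY d /\ d <= eta) ->
  (m + 1 <= M)%nat -> 1 / (1 - eta) <= INR M ->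
  0 < mu ->
  (exists t, infinite_sum (fun k => negxlogx (PY (k + (M - 1))%nat)) t /\ t <= mu) ->
  exists HX HY, entropy_is PX HX /\ entropy_is PY HY /\
    Rabs (HX - HY) <= eta * ln (INR M - 1) + hbin eta + mu.
Proof.
intros [PX0 PX1] [PY0 PY1] Hm He [d [[s [Hs Hd]] Hde]] HmM HMe Hmu [t [Ht Htmu]].
set (N := (M - 1)%nat) in *.
assert (m1 : (1 <= m)%nat).
{ destruct m; [|lia]. exfalso. pose proof (inf_fin PX 0 ltac:(intros; apply Hm; lia)).
  pose proof (uniqueness_sum _ _ _ PX1 H). simpl in H0. lra. }
assert (HNm : (m <= N)%nat) by (unfold N; lia).
assert (HMN : INR M - 1 = INR N). { unfold N. replace M with (S (M - 1)) at 1 by lia. rewrite S_INR. ring. }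
rewrite HMN.
assert (Hsupp : forall i, (S N <= i)%nat -> PX i = 0) by (intros; apply Hm; lia).
pose proof (inf_shift1 PY 1 N PY1) as HT. set (T := 1 - sm N PY) in *.
assert (T0 : 0 <= T).
{ apply Rle_trans with (PY (0 + N)%nat); auto. apply (inf_nonneg_term (fun k => PY (k + N)%nat)); auto. }
assert (T1 : T <= 1). { assert (0 <= sm N PY) by (apply sm_nonneg; auto). unfold T; lra. }
set (q := fun i => if Nat.ltb i N then PY i else T).
assert (qlt : forall i, (i < N)%nat -> q i = PY i).
{ intros i Hi. unfold q. destruct (Nat.ltb_spec i N); [auto|lia]. }
assert (qN : q N = T). { unfold q. destruct (Nat.ltb_spec N N); [lia|auto]. }
assert (Sq : sm (S N) q = 1). { simpl. rewrite (sm_ext N q PY qlt), qN. unfold T; ring. }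
assert (Sp : sm (S N) PX = 1).
{ pose proof (inf_fin PX (S N) Hsupp). eapply uniqueness_sum; eauto. }
assert (Hq0 : forall i, (i < S N)%nat -> 0 <= q i).
{ intros i _. unfold q. destruct (Nat.ltb i N); auto. }
pose proof (inf_shift1 _ _ N Hs) as Hs2.
assert (Hs3 : infinite_sum (fun k => PY (k + N)%nat) (s - sm N (fun i => Rabs (PX i - PY i)))).
{ eapply inf_ext; [|exact Hs2]. intros i. simpl. rewrite Hm by lia.
  rewrite Rminus_0_l, Rabs_Ropp, Rabs_right; auto. apply Rle_ge; auto. }
pose proof (uniqueness_sum _ _ _ Hs3 HT) as EsT.
assert (Ed : sm (S N) (fun i => Rabs (PX i - q i)) / 2 = d).
{ simpl. rewrite (sm_ext N _ (fun i => Rabs (PX i - PY i))) by (intros i Hi; rewrite qlt; auto).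
  rewrite qN, (Hm N) by lia. rewrite Rminus_0_l, Rabs_Ropp, Rabs_right by lra. lra. }
assert (Ed2 : sm (S N) (fun i => Rabs (q i - PX i)) / 2 = d).
{ rewrite <- Ed. f_equal. apply sm_ext. intros; apply Rabs_minus_sym. }
assert (N1 : (1 <= N)%nat) by lia.
pose proof (core PX q N N1 (fun i _ => PX0 i) Hq0 Sp Sq) as C1.
pose proof (core q PX N N1 Hq0 (fun i _ => PX0 i) Sq Sp) as C2.
rewrite Ed in C1. rewrite Ed2 in C2.
assert (Hm2 : d * ln (INR N) + hbin d <= eta * ln (INR N) + hbin eta).
{ apply mono; try lra.
  - split; [|auto]. subst d. assert (0 <= s). { apply (inf_le (fun _ => 0) (fun i => Rabs (PX i - PY i))); auto.
      intros; apply Rabs_pos. apply (inf_fin _ 0); auto. } lra.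
  - apply (le_INR 1). auto.
  - assert (INR M = INR N + 1). lra.
    assert (1 <= INR M * (1 - eta)).
    { apply Rmult_le_compat_r with (r := 1 - eta) in HMe; [|lra].
      unfold Rdiv in HMe. rewrite Rmult_1_l, Rinv_l in HMe by lra. auto. }
    nra. }
assert (tT : negxlogx T <= t).
{ apply (inf_le (fun k => PY (k + N)%nat * (- ln T)) (fun k => negxlogx (PY (k + N)%nat))); auto.
  - intros k. apply fle_tail. split; auto. apply (inf_nonneg_term (fun k => PY (k + N)%nat)); auto.
  - replace (negxlogx T) with (T * - ln T) by (unfold negxlogx; ring). apply inf_scal; auto. }
assert (fT0 : 0 <= negxlogx T) by (apply f_nonneg; lra).
exists (sm (S N) (fun i => negxlogx (PX i))), (sm N (fun i => negxlogx (PY i)) + t).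
split; [|split].
- apply inf_fin. intros i Hi. rewrite Hsupp by lia. apply f0.
- apply inf_shift2. auto.
- assert (E : sm (S N) (fun i => negxlogx (q i)) = sm N (fun i => negxlogx (PY i)) + negxlogx T).
  { simpl. rewrite qN. f_equal. apply sm_ext. intros; rewrite qlt; auto. }
  rewrite E in C1, C2. apply Rabs_le. lra.
Qed.
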